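(* Consider the linear vehicle platoon model $\dot{x}(t)=A_{\mathrm{c}}x(t)+B_{\mathrm{c}}u(t)$ with communication attempt time instants $\mathcal{S}=\{s_0,s_1,s_2,\ldots\}$ and the time-discretized braking model (so that the reference desired acceleration $u_0(t)$ is constant on each interval $[s_k,s_{k+1})$). If $\mathcal{S}\subseteq\mathcal{T}$ with $\mathcal{T}\triangleq\{t_0,t_1,t_2,\ldots\}$ and there exists $\alpha>0$ such that \[ t_{k+1}-t_{k}\leq\ln\left(\frac{\mu(\tilde{A})\alpha}{\varphi\|\tilde{x}(t_{k})\|}+1\right)/\mu(\tilde{A}) \] for every $k\in\mathbb{N}_0$, where \[ \varphi\triangleq\max_{i\in\{2,\ldots,n\}}\|q_i^{\top}(A_{\mathrm{c}}b_1^{\top}+B_{\mathrm{c}}b_2^{\top})\|, \] then \[ |d_i(t)-d_i(t_k)|\leq\alpha,\quad t\in[t_k,t_{k+1}), \] for every $k\in\mathbb{N}_0$ and every $i\in\{2,\ldots,n\}$.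
   Context: The platoon consists of a virtual reference vehicle and $n$ actual vehicles; its dynamics are the linear system $\dot{x}(t)=A_{\mathrm{c}}x(t)+B_{\mathrm{c}}u(t)$ with state $x(t)\in\mathbb{R}^{3+6n}$ (stacking $[p_0,v_0,a_0]$ for the reference vehicle and $[e_i,\dot e_i,p_i,v_i,a_i,u_i]$ for each vehicle $i=1,\dots,n$, with $p$ positions) and input $u(t)=[u_0(t),\hat u_0(t),\hat u_1(t),\ldots,\hat u_{n-1}(t)]^\top\in\mathbb{R}^{1+n}$, where $A_{\mathrm{c}}\in\mathbb{R}^{(3+6n)\times(3+6n)}$ and $B_{\mathrm{c}}\in\mathbb{R}^{(3+6n)\times(1+n)}$ are the platoon system matrices. Communication attempts occur at $s_j=jT$, $T>0$; the received desired accelerations $\hat u_i(t)$ ($i\ge 1$) are held constant on $[s_j,s_{j+1})$ (updated at $s_j$ on success, kept on packet loss), $\hat u_0=u_0$, and the time-discretized braking model sets $u_0(t)=u_{0,k}$ constant on $[s_k,s_{k+1})$. Hence, when $\mathcal{S}\subseteq\mathcal{T}$, $u(t)=u(t_k)$ on $[t_k,t_{k+1})$. Inter-vehicle distances are $d_i(t)=p_{i-1}(t)-p_i(t)-L_i=q_i^\top x(t)-L_i$ for $i\in\{2,\ldots,n\}$, where $L_i>0$ is the vehicle length and $q_i\in\mathbb{R}^{3+6n}$ has entry $-1$ at position $6i+6$, entry $1$ at position $6i$, and $0$ elsewhere. The lifted state is $\tilde x(t)=[x^\top(t),u^\top(t)]^\top\in\mathbb{R}^{4+7n}$, satisfying $\dot{\tilde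 x}(t)=\tilde A\tilde x(t)$ on $[t_k,t_{k+1})$ with $\tilde{A}=\begin{bmatrix}A_{\mathrm{c}} & B_{\mathrm{c}}\\ 0 & 0\end{bmatrix}$. The matrices $b_1=\begin{bmatrix}I_{3+6n}\\ 0_{(1+n)\times(3+6n)}\end{bmatrix}\in\mathbb{R}^{(4+7n)\times(3+6n)}$ and $b_2=\begin{bmatrix}0_{(3+6n)\times(1+n)}\\ I_{1+n}\end{bmatrix}\in\mathbb{R}^{(4+7n)\times(1+n)}$, where $I_m$ denotes the $m\times m$ identity matrix, satisfy $x=b_1^\top\tilde x$, $u=b_2^\top\tilde x$. $\|\cdot\|$ is the Euclidean norm / induced matrix norm and $\mu(M)=\lambda_{\max}((M+M^\top)/2)$ is the logarithmic norm. *)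

(* Defs.v *)
From HB Require Import structures.
From mathcomp Require Import all_boot all_order all_algebra.
From mathcomp Require Import all_classical all_reals all_analysis.
Set Implicit Arguments. Unset Strict Implicit. Unset Printing Implicit Defensive.
Import Order.TTheory GRing.Theory Num.Theory.
Import numFieldNormedType.Exports.
Local Open Scope classical_set_scope.
Local Open Scope ring_scope.

Section Defs.
Variable R : realType.

Definition enorm (N : nat) (v : 'cV[R]_N) : R :=
  Num.sqrt (\sum_(i < N) v i 0 ^+ 2).

Definition opnorm (m N : nat) (A : 'M[R]_(m, N)) : R :=
  sup [set y | exists2 v : 'cV[R]_N, enorm v = 1 & y = enorm (A *m v)].

Definition lambda_max (N : nat) (M : 'M[R]_N) : R :=
  sup [set a | eigenvalue M a].

Definition lognorm (N : nat) (M : 'M[R]_N) : R :=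
  lambda_max (2^-1 *: (M + M^T)).

Definition nx (n : nat) : nat := (3 + 6 * n)%N.
Definition nu (n : nat) : nat := (1 + n)%N.

Definition Atilde (n : nat) (Ac : 'M[R]_(nx n)) (Bc : 'M[R]_(nx n, nu n))
  : 'M[R]_(nx n + nu n) := block_mx Ac Bc 0 0.

Definition b1 (n : nat) : 'M[R]_(nx n + nu n, nx n) := col_mx 1%:M 0.
Definition b2 (n : nat) : 'M[R]_(nx n + nu n, nu n) := col_mx 0 1%:M.

Definition xtilde (n : nat) (x : 'cV[R]_(nx n)) (u : 'cV[R]_(nu n))
  : 'cV[R]_(nx n + nu n) := col_mx x u.

(* q_i : selects p_{i-1} - p_i.  With 1-based positions, p_j sits at
   position 6j (j >= 1); so +1 at position 6(i-1), -1 at position 6i,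
   i.e. 0-based indices 6i-7 and 6i-1 (for i >= 2). *)
Definition q (n i : nat) : 'cV[R]_(nx n) :=
  \col_(j < nx n) ((nat_of_ord j == 6 * i - 7)%N%:R - (nat_of_ord j == 6 * i - 1)%N%:R).

Definition dist (n : nat) (L : nat -> R) (x : R -> 'cV[R]_(nx n)) (i : nat) (t : R) : R :=
  ((q n i)^T *m x t) 0 0 - L i.

Definition phi (n : nat) (Ac : 'M[R]_(nx n)) (Bc : 'M[R]_(nx n, nu n)) : R :=
  \big[Num.max/0]_(2 <= i < n.+1)
     opnorm ((q n i)^T *m (Ac *m (b1 n)^T + Bc *m (b2 n)^T)).

End Defs.

(* Main.v *)
Require Import Defs.
From HB Require Import structures.
From mathcomp Require Import all_boot all_order all_algebra.
From mathcomp Require Import all_classical all_reals all_analysis.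
From mathcomp Require Import ring lra.
Import Order.TTheory GRing.Theory Num.Theory.
Import numFieldNormedType.Exports.
Local Open Scope classical_set_scope.
Local Open Scope ring_scope.

Lemma cont_sum {R : realType} (T : topologicalType) k (F : 'I_k -> T -> R) :
  (forall i, continuous (F i)) -> continuous (fun x => \sum_(i < k) F i x).
Proof.
elim: k F => [|k IH] F H.
  rewrite (_ : (fun x => _) = cst 0); first exact: cst_continuous.
  by apply/funext => y; rewrite big_ord0.
rewrite (_ : (fun x => _) = (fun x => \sum_(i < k) F (widen_ord (leqnSn k) i) x) + F ord_max).
  by move=> x; apply: continuousD; [apply: IH => i; exact: H | exact: H].
by apply/funext => y; rewrite big_ord_recr.
Qed.

Section Ray.
Context {R : realType} {N : nat}.
Implicit Types (u v w : 'rV[R]_N) (P : 'M[R]_N).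

Definition Bf P u v : R := (u *m P *m v^T) 0 0.
Definition f2 w : R := Bf 1%:M w w.

Lemma f2E w : f2 w = \sum_j w 0 j ^+ 2.
Proof. by rewrite /f2 /Bf mulmx1 mxE; apply: eq_bigr => j _; rewrite mxE expr2. Qed.

Lemma f2_ge0 w : 0 <= f2 w.
Proof. by rewrite f2E sumr_ge0 // => j _; rewrite sqr_ge0. Qed.

Lemma f2_eq0 w : f2 w = 0 -> w = 0.
Proof.
rewrite f2E => /psumr_eq0P H; apply/rowP => j; rewrite mxE.
by apply/eqP; rewrite -sqrf_eq0; apply/eqP; apply: H => // k _; rewrite sqr_ge0.
Qed.

Lemma BfDl P u v w : Bf P (u + v) w = Bf P u w + Bf P v w.
Proof. by rewrite /Bf !mulmxDl mxE. Qed.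

Lemma BfDr P u v w : Bf P w (u + v) = Bf P w u + Bf P w v.
Proof. by rewrite /Bf linearD /= mulmxDr mxE. Qed.

Lemma BfZl P k u v : Bf P (k *: u) v = k * Bf P u v.
Proof. by rewrite /Bf -!scalemxAl mxE. Qed.

Lemma BfZr P k u v : Bf P u (k *: v) = k * Bf P u v.
Proof. by rewrite /Bf linearZ /= -scalemxAr mxE. Qed.

Lemma Bf_sym P u v : P^T = P -> Bf P u v = Bf P v u.
Proof.
move=> sP; rewrite /Bf.
by rewrite -[in LHS](trmxK (u *m P *m v^T)) [LHS]mxE !trmx_mul trmxK sP mulmxA.
Qed.

Lemma BfB P1 P2 u v : Bf (P1 - P2) u v = Bf P1 u v - Bf P2 u v.
Proof. by rewrite /Bf mulmxBr mulmxBl [LHS]mxE [X in _ + X]mxE. Qed.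

Lemma Bfs (l : R) u v : Bf l%:M u v = l * Bf 1%:M u v.
Proof. by rewrite /Bf mul_mx_scalar mulmx1 -scalemxAl mxE. Qed.

Lemma Bf0 P v : Bf P 0 v = 0.
Proof. by rewrite /Bf !mul0mx mxE. Qed.

Lemma Bf_cont P : continuous (fun w => Bf P w w).
Proof.
rewrite (_ : (fun w => _) = (fun w => \sum_j (\sum_i w 0 i * P i j) * w 0 j)).
  apply: cont_sum => j x; apply: continuousM; last exact: coord_continuous.
  apply: cont_sum => i y; apply: continuousM; first exact: coord_continuous.
  exact: cst_continuous.
apply/funext => w; rewrite /Bf mxE; apply: eq_bigr => j _; rewrite !mxE.
by congr (_ * _); apply: eq_bigr => i _; rewrite mxE.
Qed.

Lemma rayleigh (S : 'M[R]_N) : (0 < N)%N -> S^T = S ->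
  exists lam, [/\ eigenvalue S lam, (forall a, eigenvalue S a -> a <= lam) &
    forall w, Bf S w w <= lam * f2 w].
Proof.
move=> N0 sS.
pose A := [set w : 'rV[R]_N | f2 w = 1].
have A0 : A !=set0.
  exists (delta_mx 0 (Ordinal N0)); rewrite /A /= /f2 /Bf mulmx1 trmx_delta.
  by rewrite mul_delta_mx mxE !eqxx.
have cA : compact A.
  apply: bounded_closed_compact.
    exists 1; split => // M M1 w Aw.
    rewrite /Num.Def.normr/= mx_normrE.
    apply: bigmax_le => [|[i j] _ /=]; first by apply: ltW; apply: lt_trans M1.
    rewrite (ord1 i).
    have : w 0 j ^+ 2 <= 1.
      rewrite -Aw f2E (bigD1 j) //= lerDl sumr_ge0 // => k _; exact: sqr_ge0.
    move=> h; apply: le_trans (ltW M1).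
    rewrite ler_norml; apply/andP; split; nra.
  apply: (@preimage_closed _ _ f2 [set 1]); last exact: closed_eq.
  by move=> x _; apply: Bf_cont.
have [c Ac cmax] := compact_EVT_max A0 cA (continuous_subspaceT (Bf_cont S)).
move: Ac; rewrite inE /A /= => f2c.
pose lam := Bf S c c.
have key w : Bf S w w <= lam * f2 w.
  have [w0|wn0] := eqVneq (f2 w) 0.
    by rewrite (f2_eq0 _ w0) Bf0 /f2 Bf0 mulr0.
  have wp : 0 < f2 w by rewrite lt_neqAle eq_sym wn0 f2_ge0.
  pose k := (Num.sqrt (f2 w))^-1.
  have k2 : k * k * f2 w = 1.
    by rewrite /k -invfM -expr2 sqr_sqrtr ?f2_ge0 // mulVf // gt_eqF.
  have Aw : A (k *: w) by rewrite /A /= /f2 BfZl BfZr mulrA k2.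
  have := cmax (k *: w); rewrite inE => /(_ Aw).
  rewrite BfZl BfZr -/lam mulrA => h.
  have -> : Bf S w w = (k * k * Bf S w w) * f2 w.
    by rewrite mulrAC k2 mul1r.
  by rewrite ler_wpM2r // ltW.
pose P := lam%:M - S.
have sP : P^T = P by rewrite /P linearB /= tr_scalar_mx sS.
have QP u : Bf P u u = lam * f2 u - Bf S u u by rewrite /P BfB Bfs.
have Qge0 u : 0 <= Bf P u u by rewrite QP subr_ge0 key.
have Qc : Bf P c c = 0 by rewrite QP f2c mulr1 subrr.
have orth w : Bf P c w = 0.
  set a := Bf P c w; set b := Bf P w w.
  have H e : 0 <= 2 * e * a + e ^+ 2 * b.
    have := Qge0 (c + e *: w).
    rewrite !BfDl !BfDr !BfZl !BfZr Qc (Bf_sym _ w c sP) -/a -/b.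
    by congr (0 <= _); ring.
  have b0 : 0 <= b by apply: Qge0.
  pose d := (b + 1)^-1.
  have d0 : 0 < d by rewrite /d invr_gt0; lra.
  have b1 : 0 < b + 1 by lra.
  have dd : d * (b + 1) = 1 by rewrite /d mulVf // gt_eqF.
  have := H (- a * d).
  move=> h; apply/eqP; rewrite -sqrf_eq0; apply/eqP.
  have h2 : 0 <= - (a ^+ 2 * d * (1 + d)).
    apply: le_trans h _; rewrite le_eqVlt; apply/orP; left; apply/eqP.
    have -> : 1 + d = 1 + d * (b + 1) - d * b by ring.
    rewrite dd; ring.
  apply/eqP; rewrite eq_le sqr_ge0 andbT; nra.
have cP0 : c *m P = 0.
  by apply: f2_eq0; rewrite /f2 /Bf mulmx1; exact: orth.
have eig : c *m S = lam *: c.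
  by move: cP0; rewrite /P mulmxBr mul_mx_scalar => /eqP; rewrite subr_eq0 => /eqP <-.
have cn0 : c != 0.
  by apply/eqP => c0; move: f2c; rewrite c0 /f2 Bf0 => /esym/eqP; rewrite oner_eq0.
exists lam; split => //.
- by apply/eigenvalueP; exists c.
- move=> a /eigenvalueP [v va vn0].
  have e : Bf S v v = a * f2 v by rewrite /f2 /Bf mulmx1 va -scalemxAl mxE.
  have vp : 0 < f2 v.
    rewrite lt_neqAle f2_ge0 andbT eq_sym; apply/eqP => /f2_eq0 v0.
    by move: vn0; rewrite v0 eqxx.
  by rewrite -(ler_pM2r vp) -e key.
Qed.
End Ray.

Section Der.
Context {R : realType}.
Implicit Types (f g : R -> R).

Lemma dD {f g} {df dg s : R} : is_derive s 1 f df -> is_derive s 1 g dg ->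
  is_derive s 1 (fun x => f x + g x) (df + dg).
Proof. move=> H1 H2; exact: is_deriveD. Qed.

Lemma dN {f} {df s : R} : is_derive s 1 f df -> is_derive s 1 (fun x => - f x) (- df).
Proof. move=> H1; exact: is_deriveN. Qed.

Lemma dM {f g} {df dg s : R} : is_derive s 1 f df -> is_derive s 1 g dg ->
  is_derive s 1 (fun x => f x * g x) (f s * dg + g s * df).
Proof. move=> H1 H2; exact: is_deriveM. Qed.

Lemma dC (c s : R) : is_derive s 1 (fun _ : R => c) 0.
Proof. exact: is_derive_cst. Qed.

Lemma dS {k} {h : 'I_k -> R -> R} {dh : 'I_k -> R} {s : R} : (forall i, is_derive s 1 (h i) (dh i)) ->
  is_derive s 1 (fun x => \sum_(i < k) h i x) (\sum_(i < k) dh i).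
Proof.
move=> H; have -> : (fun x => \sum_(i < k) h i x) = \sum_(i < k) h i.
  by rewrite fct_sumE.
exact: is_derive_sum.
Qed.

Lemma dE (c a s : R) :
  is_derive s 1 (fun x => expR (c * (x - a))) (expR (c * (s - a)) * c).
Proof.
have h1 : is_derive s 1 (fun x => c * (x - a)) c.
  have := dM (dC c s) (dD (@is_derive_id _ _ s 1) (dC (- a) s)).
  by rewrite addr0 mulr1 mulr0 addr0.
exact: (@is_derive1_comp _ expR (fun x => c * (x - a)) s _ _ (is_derive_expR _) h1).
Qed.

Lemma nincr f (a b : R) : a <= b ->
  (forall s : R, a < s < b -> exists2 d : R, is_derive s 1 f d & d <= 0) ->
  {within `[a, b], continuous f} -> f b <= f a.
Proof.
move=> ab H cf.
apply: (@ler0_derive1_le_cc _ f a b) => //.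
- move=> s; rewrite in_itv /= => /H [d hd _]; exact: ex_derive.
- move=> s; rewrite in_itv /= => /H [d hd d0]; by rewrite derive1E derive_val.
- by rewrite in_itv /= lexx ab.
- by rewrite in_itv /= lexx ab.
Qed.
End Der.

Section M.
Context {R : realType}.

Lemma lambda_max_eq {N} {S : 'M[R]_N} {lam} : eigenvalue S lam ->
  (forall a, eigenvalue S a -> a <= lam) -> lambda_max S = lam.
Proof.
move=> el ub; rewrite /lambda_max.
have ne : [set a | eigenvalue S a] !=set0 by exists lam.
apply/eqP; rewrite eq_le; apply/andP; split.
  by apply: ge_sup => // a; apply: ub.
by apply: sup_upper_bound => //; split => //; exists lam => a; apply: ub.
Qed.

Lemma Bf_tr {N} (P : 'M[R]_N) u v : Bf P^T u v = Bf P v u.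
Proof.
rewrite /Bf.
by rewrite -[in LHS](trmxK (u *m P^T *m v^T)) [LHS]mxE !trmx_mul !trmxK mulmxA.
Qed.

Lemma BfDm {N} (P1 P2 : 'M[R]_N) u v : Bf (P1 + P2) u v = Bf P1 u v + Bf P2 u v.
Proof. by rewrite /Bf mulmxDr mulmxDl mxE. Qed.

Lemma BfZm {N} (k : R) (P : 'M[R]_N) u v : Bf (k *: P) u v = k * Bf P u v.
Proof. by rewrite /Bf -scalemxAr -scalemxAl mxE. Qed.

Lemma lognorm_bound {N} (A : 'M[R]_N) (y : 'cV[R]_N) : (0 < N)%N ->
  (y^T *m A *m y) 0 0 <= lognorm A * \sum_i y i 0 ^+ 2.
Proof.
move=> N0; rewrite /lognorm.
set S := 2^-1 *: (A + A^T).
have sS : S^T = S by rewrite /S linearZ /= linearD /= trmxK addrC.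
have [lam [el ub key]] := rayleigh S N0 sS.
rewrite (lambda_max_eq el ub).
have := key y^T; rewrite f2E.
have -> : Bf S y^T y^T = (y^T *m A *m y) 0 0.
  by rewrite /S BfZm BfDm Bf_tr /Bf trmxK; field.
suff -> : \sum_j y^T 0 j ^+ 2 = \sum_i y i 0 ^+ 2 by [].
by apply: eq_bigr => j _; rewrite mxE.
Qed.

Lemma enorm_ge0 {N} (v : 'cV[R]_N) : 0 <= enorm v.
Proof. exact: sqrtr_ge0. Qed.

Lemma sumsq_ge0 {N} (v : 'cV[R]_N) : 0 <= \sum_i v i 0 ^+ 2.
Proof. by apply: sumr_ge0 => i _; apply: sqr_ge0. Qed.

Lemma enorm_sq {N} (v : 'cV[R]_N) : enorm v ^+ 2 = \sum_i v i 0 ^+ 2.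
Proof. by rewrite /enorm sqr_sqrtr // sumsq_ge0. Qed.

Lemma enorm1 (w : 'cV[R]_1) : enorm w = `|w 0 0|.
Proof. by rewrite /enorm big_ord1 sqrtr_sqr. Qed.

Lemma enormZ {N} (k : R) (v : 'cV[R]_N) : enorm (k *: v) = `|k| * enorm v.
Proof.
rewrite /enorm -sqrtr_sqr -sqrtrM ?sqr_ge0 // mulr_sumr.
by congr Num.sqrt; apply: eq_bigr => i _; rewrite mxE exprMn.
Qed.

Lemma opnorm_bound {N} (W : 'M[R]_(1, N)) (z : 'cV[R]_N) :
  `|(W *m z) 0 0| <= opnorm W * enorm z.
Proof.
have [z0|zn0] := eqVneq (enorm z) 0.
  have zz : z = 0.
    apply/matrixP => i j; rewrite (ord1 j) mxE.
    have h0 : \sum_i z i 0 ^+ 2 = 0.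
      by apply/eqP; rewrite eq_le sumsq_ge0 andbT -sqrtr_eq0; move: z0; rewrite /enorm => ->.
    move: h0 => /psumr_eq0P h.
    by apply/eqP; rewrite -sqrf_eq0; apply/eqP; apply: h => // k _; apply: sqr_ge0.
  by rewrite z0 mulr0 zz mulmx0 mxE normr0.
have zp : 0 < enorm z by rewrite lt_neqAle eq_sym zn0 enorm_ge0.
set Y := [set y | exists2 v : 'cV[R]_N, enorm v = 1 & y = enorm (W *m v)].
have Yv : Y (enorm (W *m ((enorm z)^-1 *: z))).
  exists ((enorm z)^-1 *: z) => //.
  by rewrite enormZ ger0_norm ?invr_ge0 ?enorm_ge0 // mulVf.
have hs : has_sup Y.
  split; first by eexists; exact: Yv.
  exists (\sum_j `|W 0 j|) => _ [v v1 ->].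
  rewrite enorm1 mxE; apply: le_trans (ler_norm_sum _ _ _) _.
  apply: ler_sum => j _; rewrite normrM ler_piMr //.
  have : v j 0 ^+ 2 <= 1.
    rewrite -(expr1n _ 2) -v1 enorm_sq (bigD1 j) //= lerDl.
    by apply: sumr_ge0 => k _; exact: sqr_ge0.
  move=> h; rewrite ler_norml; apply/andP; split; nra.
have := sup_upper_bound hs Yv.
rewrite -/(opnorm W) -scalemxAr enorm1 mxE normrM ger0_norm ?invr_ge0 ?enorm_ge0 //.
by rewrite ler_pdivrMl // mulrC.
Qed.

Lemma le_bigmaxR (I : eqType) (r : seq I) (F : I -> R) i : i \in r ->
  F i <= \big[Num.max/0]_(j <- r) F j.
Proof.
elim: r => [//|j r IH]; rewrite inE big_cons => /orP [/eqP <-|/IH h].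
  by rewrite le_max lexx.
by rewrite le_max h orbT.
Qed.

Lemma bigmax_ge0 (I : Type) (r : seq I) (F : I -> R) :
  0 <= \big[Num.max/0]_(j <- r) F j.
Proof.
by elim: r => [|j r IH]; rewrite ?big_nil // big_cons le_max IH orbT.
Qed.
End M.

Lemma cont_of_der {R : realType} (f : R -> R) :
  (forall r : R, exists d : R, is_derive r 1 f d) -> continuous f.
Proof.
move=> H r; have [d hd] := H r.
apply: differentiable_continuous; apply/derivable1_diffP; exact: ex_derive.
Qed.

Lemma contD {R : realType} (T : topologicalType) (f g : T -> R) x :
  {for x, continuous f} -> {for x, continuous g} ->
  {for x, continuous (fun y => f y + g y)}.
Proof. exact: continuousD. Qed.

Theorem theorem2 (R : realType) (n : nat)
  (Ac : 'M[R]_(nx n)) (Bc : 'M[R]_(nx n, nu n)) (L : nat -> R)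
  (T : R) (x : R -> 'cV[R]_(nx n)) (u : R -> 'cV[R]_(nu n))
  (t : nat -> R) (alpha : R) :
  0 < T ->
  (forall i, (2 <= i <= n)%N -> 0 < L i) ->
  {within `[0, +oo[%classic, continuous x} ->
  (forall tau : R, 0 < tau -> (forall j : nat, tau != j%:R * T) ->
     is_derive tau 1 x (Ac *m x tau + Bc *m u tau)) ->
  (forall (j : nat) (tau : R), j%:R * T <= tau < j.+1%:R * T ->
     u tau = u (j%:R * T)) ->
  t 0%N = 0 ->
  (forall k, t k < t k.+1) ->
  (forall j : nat, exists k, t k = j%:R * T) ->
  0 < alpha ->
  0 < lognorm (Atilde Ac Bc) ->
  (forall k,
     phi Ac Bc * enorm (xtilde (x (t k)) (u (t k))) = 0 \/
     t k.+1 - t k <=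
       ln (lognorm (Atilde Ac Bc) * alpha
           / (phi Ac Bc * enorm (xtilde (x (t k)) (u (t k)))) + 1)
       / lognorm (Atilde Ac Bc)) ->
  forall (k i : nat) (tau : R), (2 <= i <= n)%N -> t k <= tau < t k.+1 ->
    `| dist L x i tau - dist L x i (t k) | <= alpha.
Proof.
move=> T0 L0 xc xd uc t0 tinc tS a0 mu0 cond k i tau irange /andP[ak tb].
have tmono m m' : (m <= m')%N -> t m <= t m'.
  move=> /subnK <-; elim: (m' - m)%N => [|d IH]; first by rewrite add0n.
  by rewrite addSn; apply: le_trans IH (ltW (tinc _)).
have tlt m m' : t m < t m' -> (m < m')%N.
  by move=> h; rewrite ltnNge; apply/negP => /tmono; rewrite leNgt h.
set a := t k in ak *; set b := t k.+1 in tb *.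
have a_ge0 : 0 <= a by rewrite /a -t0; apply: tmono.
have noS s : a < s < b -> forall j : nat, s != j%:R * T.
  move=> /andP[a_s sb] j; apply/eqP => sj; have [m tm] := tS j.
  have h1 : (k < m)%N by apply: tlt; rewrite tm -sj.
  have h2 : (m < k.+1)%N by apply: tlt; rewrite tm -sj.
  by have := leq_trans h2 h1; rewrite ltnn.
have ucst s : a <= s < b -> u s = u a.
  move=> /andP[a_s sb].
  set j := Num.truncn (a / T).
  have /andP[j1 j2] := truncn_itv (divr_ge0 a_ge0 (ltW T0)).
  rewrite -/j ler_pdivlMr // ltr_pdivrMr // in j1 j2.
  have [m tm] := tS j.+1.
  have km : (k < m)%N by apply: tlt; rewrite tm.
  have bm : b <= t m by apply: tmono.
  rewrite (uc j s); last by rewrite (le_trans j1 a_s) /= (lt_le_trans sb) // -tm.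
  by rewrite (uc j a) // j1 j2.
have [->|ta] := eqVneq tau a; first by rewrite subrr normr0 ltW.
have a_t : a < tau by rewrite lt_neqAle eq_sym ta ak.
set u0 := u a.
set mu := lognorm (Atilde Ac Bc).
pose y s := xtilde (x s) u0.
pose D s := Ac *m x s + Bc *m u0.
pose C := \sum_(j < nu n) u0 j 0 ^+ 2.
pose E s := \sum_(j < nx n) x s j 0 * x s j 0 + C.
have EE s : \sum_(j < nx n + nu n) y s j 0 ^+ 2 = E s.
  rewrite big_split_ord /=; congr (_ + _); apply: eq_bigr => j _;
  by rewrite /y /xtilde ?col_mxEu ?col_mxEd // expr2.
have Npos : (0 < nx n + nu n)%N by rewrite /nx /nu addn_gt0.
have dx s : a < s < b -> is_derive s 1 x (D s).
  move=> hs; have s0 : 0 < s by case/andP: hs => h _; apply: le_lt_trans h.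
  have := xd s s0 (noS s hs); rewrite ucst //.
  by case/andP: hs => h1 h2; rewrite ltW.
have dxj s j : a < s < b -> is_derive s 1 (fun r => x r j 0) (D s j 0).
  move=> hs; have hd := dx s hs.
  have dv : derivable x s 1 by exact: ex_derive.
  have e := derive_mx dv; rewrite derive_val in e.
  rewrite e mxE; apply: derivableP.
  exact: ((derivable_mxP x s 1).1 dv j 0).
have cx s : {within `[a, s], continuous x}.
  apply: continuous_subspaceW xc => r /=; rewrite !in_itv /= andbT => /andP[ar _].
  exact: le_trans a_ge0 ar.
have cxj s j : {within `[a, s], continuous (fun r => x r j 0)}.
  move=> r; exact: (continuous_comp (cx s r) (@coord_continuous R _ _ j 0 (x r))).
have quad r : \sum_j x r j 0 * D r j 0 <= mu * E r.
  have h := lognorm_bound (Atilde Ac Bc) (y r) Npos; rewrite EE -/mu in h.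
  suff <- : ((y r)^T *m Atilde Ac Bc *m y r) 0 0 = \sum_j x r j 0 * D r j 0 by [].
  rewrite -mulmxA /Atilde /y /xtilde mul_block_col tr_col_mx mul_row_col !mul0mx.
  rewrite addr0 mulmx0 addr0 mxE; apply: eq_bigr => j _; by rewrite mxE.
have Ebd s : a <= s <= tau -> E s <= E a * expR (2 * mu * (s - a)).
  move=> /andP[a_s st].
  pose c := - (2 * mu).
  pose H r := E r * expR (c * (r - a)).
  have : H s <= H a.
    apply: nincr a_s _ _.
    - move=> r /andP[ar rs].
      have hr : a < r < b.
        by rewrite ar /=; apply: lt_le_trans rs _; apply: ltW; apply: le_lt_trans st tb.
      have dE' : is_derive r 1 E (\sum_j (x r j 0 * D r j 0 + x r j 0 * D r j 0) + 0).
        exact: (dD (dS (fun j => dM (dxj r j hr) (dxj r j hr))) (dC C r)).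
      exists (E r * (expR (c * (r - a)) * c) + expR (c * (r - a)) *
        (\sum_j (x r j 0 * D r j 0 + x r j 0 * D r j 0) + 0)).
        exact: dM dE' (dE c a r).
      rewrite addr0 big_split /=.
      have := quad r; have := expR_gt0 (c * (r - a)); rewrite /c.
      set S := \sum_j _; set e := expR _; nra.
    - move=> r; apply: continuousM.
        apply: continuousD; last exact: cst_continuous.
        by apply: cont_sum => j r'; apply: continuousM; apply: cxj.
      have ce : continuous (fun r : R => expR (c * (r - a))).
        by apply: cont_of_der => r'; exists (expR (c * (r' - a)) * c); exact: dE.
      by move: r; apply: continuous_subspaceT.
  rewrite /H subrr mulr0 expR0 mulr1.
  have ee : expR (c * (s - a)) * expR (2 * mu * (s - a)) = 1.
    by rewrite -expRD /c mulNr addNr expR0.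
  move=> h.
  have -> : E s = E s * expR (c * (s - a)) * expR (2 * mu * (s - a)).
    by rewrite -mulrA ee mulr1.
  by apply: ler_wpM2r => //; apply: expR_ge0.
have E_ge0 r : 0 <= E r by rewrite -EE; apply: sumr_ge0 => j _; apply: sqr_ge0.
set K := phi Ac Bc * enorm (y a).
have phi_ge0 : 0 <= phi Ac Bc by apply: bigmax_ge0.
have K_ge0 : 0 <= K by rewrite mulr_ge0 // enorm_ge0.
set W := (q R n i)^T *m (Ac *m (b1 R n)^T + Bc *m (b2 R n)^T).
have opb : opnorm W <= phi Ac Bc.
  rewrite /phi; apply: (@le_bigmaxR R nat _ (fun j => opnorm ((q R n j)^T *m (Ac *m (b1 R n)^T + Bc *m (b2 R n)^T)))).
  by rewrite mem_index_iota ltnS.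
have My r : (Ac *m (b1 R n)^T + Bc *m (b2 R n)^T) *m y r = D r.
  rewrite /b1 /b2 /y /xtilde !tr_col_mx !trmx1 !trmx0 mulmxDl -!mulmxA !mul_row_col.
  by rewrite !mul1mx !mul0mx addr0 add0r.
have gd r : a < r < tau ->
    `|((q R n i)^T *m D r) 0 0| <= K * expR (mu * (r - a)).
  move=> /andP[ar rt].
  rewrite -My mulmxA -/W; apply: le_trans (opnorm_bound _ _) _.
  have en : enorm (y r) <= enorm (y a) * expR (mu * (r - a)).
    rewrite /enorm EE EE.
    apply: le_trans (ler_wsqrtr (Ebd r _)) _; first by rewrite (ltW ar) (ltW rt).
    have -> : 2 * mu * (r - a) = 2%:R * (mu * (r - a)) by ring.
    by rewrite expRM_natl sqrtrM ?E_ge0 // sqrtr_sqr ger0_norm ?expR_ge0.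
  apply: le_trans (ler_wpM2r (enorm_ge0 _) opb) _.
  by rewrite /K -mulrA ler_wpM2l.
pose g r := ((q R n i)^T *m x r) 0 0.
have gfun : g = fun r => \sum_j (q R n i)^T 0 j * x r j 0.
  by apply/funext => r; rewrite /g mxE.
have mu_ne0 : mu != 0 by rewrite gt_eqF.
have side sg : `|sg| = 1 ->
    sg * (g tau - g a) <= K / mu * (expR (mu * (tau - a)) - 1).
  move=> sg1.
  pose F r := sg * g r + - (K / mu * expR (mu * (r - a))).
  have : F tau <= F a.
    apply: nincr (ltW a_t) _ _.
    - move=> r /andP[ar rt].
      have hr : a < r < b by rewrite ar /=; apply: lt_trans rt tb.
      have dg : is_derive r 1 g (\sum_j ((q R n i)^T 0 j * D r j 0 + x r j 0 * 0)).
        by rewrite gfun; exact: (dS (fun j => dM (dC _ r) (dxj r j hr))).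
      eexists.
        exact: (dD (dM (dC sg r) dg) (dN (dM (dC (K / mu) r) (dE mu a r)))).
      have -> : \sum_j ((q R n i)^T 0 j * D r j 0 + x r j 0 * 0) =
          ((q R n i)^T *m D r) 0 0.
        by rewrite mxE; apply: eq_bigr => j _; rewrite mulr0 addr0.
      have := gd r; rewrite ar rt => /(_ isT) h.
      have h2 : sg * ((q R n i)^T *m D r) 0 0 <= K * expR (mu * (r - a)).
        apply: le_trans h; apply: le_trans (ler_norm _) _.
        by rewrite normrM sg1 mul1r.
      rewrite !mulr0 !addr0 mulrCA divfK // (mulrC (expR _)); lra.
    - have cg : {within `[a, tau], continuous g}.
        rewrite gfun; apply: cont_sum => j r; apply: continuousM.
          exact: cst_continuous.
        exact: cxj.
      have ce : continuous (fun r : R => expR (mu * (r - a))).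
        by apply: cont_of_der => r'; exists (expR (mu * (r' - a)) * mu); exact: dE.
      move=> r; apply: (@contD R (subspace `[a, tau]) (fun r => sg * g r) (fun r => - (K / mu * expR (mu * (r - a))))).
        by apply: continuousM; [exact: cst_continuous | exact: cg].
      apply: continuousN; apply: continuousM; first exact: cst_continuous.
      by move: r; apply: continuous_subspaceT.
  rewrite /F subrr mulr0 expR0 mulr1.
  move=> h; rewrite mulrBr mulrBr mulr1; lra.
have bnd : `|g tau - g a| <= K / mu * (expR (mu * (tau - a)) - 1).
  rewrite ler_norml; apply/andP; split.
    by rewrite lerNl -[X in X <= _]mulN1r; apply: side; rewrite normrN normr1.
  by rewrite -[g tau - g a]mul1r; apply: side; rewrite normr1.
have -> : dist L x i tau - dist L x i a = g tau - g a by rewrite /dist /g; ring.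
apply: le_trans bnd _.
have [K0|Kn0] := eqVneq K 0; first by rewrite K0 mul0r mul0r ltW.
have Kp : 0 < K by rewrite lt_neqAle eq_sym Kn0 K_ge0.
case: (cond k) => [hc|hc]; first by move: Kn0; rewrite /K /y /u0 /a hc eqxx.
have hc' : b - a <= ln (mu * alpha / K + 1) / mu by exact: hc.
have zp : 0 < mu * alpha / K + 1.
  by apply: ltr_wpDl => //; rewrite divr_ge0 // mulr_ge0 // ltW.
have e1 : expR (mu * (tau - a)) <= mu * alpha / K + 1.
  rewrite -[X in _ <= X](@lnK _ (mu * alpha / K + 1)); last by rewrite posrE.
  rewrite ler_expR.
  have h : (b - a) * mu <= ln (mu * alpha / K + 1) by rewrite -ler_pdivlMr.
  apply: le_trans h; rewrite mulrC ler_pM2r //.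
  by rewrite lerD2r ltW.
have : expR (mu * (tau - a)) - 1 <= mu * alpha / K by lra.
move=> h; apply: le_trans (ler_wpM2l _ h) _.
  by rewrite divr_ge0 // ltW.
have -> : K / mu * (mu * alpha / K) = alpha by field; rewrite ?gt_eqF //.
by [].
Qed.
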